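(* Let $\mathcal{G}_s$ be a connected signed graph on nodes $\{1,\dots,n\}$ with symmetric real weight matrix $W$ (entries may be negative), signed adjacency matrix $A_s$ ($[A_s]_{ij}=W_{ij}$ for neighbours $i,j$, zero otherwise), signed degree matrix $D_s=\mathrm{diag}\big(\sum_{j}|[A_s]_{ij}|\big)$ and signed Laplacian $L_s=D_s-A_s$. Take node $n$ as the single input node and partition $$L_s=\begin{bmatrix}A_s^f & B_s^f\\ (B_s^f)^T & a_s\end{bmatrix},\qquad A_s^f\in\mathbb{R}^{(n-1)\times(n-1)},\ B_s^f\in\mathbb{R}^{n-1}.$$ Assume $\mathcal{G}_s$ is structurally balanced, i.e. there is a gauge transformation $G_t=\mathrm{diag}(\sigma_1,\dots,\sigma_n)$, $\sigma_i\in\{\pm1\}$, such that $G_tA_sG_t$ has nonnegative entries, and let $L=G_tL_sG_t$ be the Laplacian of the underlying unsigned graph $\mathcal{G}$ (weights $|W_{ij}|$). Assume $\mathcal{G}$ is input symmetric: there is a permutation matrix $\Pi\neq I$ with $\Pi L=L\Pi$ that fixes the input node $n$. Then there exists a matrix $J'\neq I$ such that (1) $J'A_s^f=A_s^fJ'$; (2) $J'^TB_s^f=B_s^f$; (3) whenever $A_s^fv=\lambda v$, also $A_s^f(J'v)=\lambda J'v$ and $A_s^f(v-J'v)=\lambda(v-J'v)$.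
   Context: A gauge transformation is a diagonal matrix with diagonal entries $\pm1$; it satisfies $G_t=G_t^T=G_t^{-1}$. For a structurally balanced signed graph, $G_tL_sG_t$ equals the (unsigned) Laplacian of the graph with edge weights $|W_{ij}|$. A permutation matrix $\Pi$ commuting with the unsigned adjacency matrix (equivalently with $L$) corresponds to a (weight-preserving) graph automorphism; ''fixing node $n$'' means $\Pi e_n=e_n$. *)

(* Defs.v *)
From HB Require Import structures.
From mathcomp Require Import all_boot all_order all_algebra all_fingroup.
Set Implicit Arguments. Unset Strict Implicit. Unset Printing Implicit Defensive.
Import Order.TTheory GRing.Theory Num.Theory.
Local Open Scope ring_scope.

Definition input_node (m : nat) : 'I_(m + 1) := rshift m ord0.

Section Defs.
Variable R : realFieldType.
Variable N : nat.

Definition signed_adjacency (A : 'M[R]_N) : Prop :=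
  A^T = A /\ forall i, A i i = 0.

Definition connected_graph (A : 'M[R]_N) : Prop :=
  forall i j : 'I_N, connect [rel x y | A x y != 0] i j.

Definition signed_degree (A : 'M[R]_N) : 'M[R]_N :=
  \matrix_(i, j) ((i == j)%:R * \sum_k `|A i k|).

Definition signed_laplacian (A : 'M[R]_N) : 'M[R]_N := signed_degree A - A.

Definition gauge (s : 'I_N -> bool) : 'M[R]_N :=
  \matrix_(i, j) ((i == j)%:R * (-1) ^+ s i).

Definition structurally_balanced (A : 'M[R]_N) : Prop :=
  exists s : 'I_N -> bool, forall i j, 0 <= (gauge s *m A *m gauge s) i j.

Definition unsigned_laplacian (A : 'M[R]_N) : 'M[R]_N :=
  signed_laplacian (map_mx Num.norm A).
End Defs.

Definition input_symmetric (R : realFieldType) (m : nat) (L : 'M[R]_(m + 1)) : Prop :=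
  exists s : 'S_(m + 1),
    let Pi : 'M[R]_(m + 1) := perm_mx s in
    let e_n : 'cV[R]_(m + 1) := delta_mx (input_node m) 0 in
    Pi != 1%:M /\ Pi *m L = L *m Pi /\ Pi *m e_n = e_n.

(* Main.v *)
Require Import Defs.
From HB Require Import structures.
From mathcomp Require Import all_boot all_order all_algebra all_fingroup.
Import Order.TTheory GRing.Theory Num.Theory.
Local Open Scope ring_scope.

Section H.
Variable R : realFieldType.
Variable N : nat.
Implicit Types (M : 'M[R]_N) (s : 'I_N -> bool).
Local Notation gauge s := (@gauge R N s).

Lemma gaugeMl s M i j : (gauge s *m M) i j = (-1) ^+ s i * M i j.
Proof.
rewrite !mxE (bigD1 i) //= big1 => [|k nk]; last by rewrite !mxE eq_sym (negPf nk) mul0r mul0r.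
by rewrite !mxE eqxx mul1r addr0.
Qed.

Lemma gaugeMr s M i j : (M *m gauge s) i j = M i j * (-1) ^+ s j.
Proof.
rewrite !mxE (bigD1 j) //= big1 => [|k nk]; last by rewrite !mxE (negPf nk) mul0r mulr0.
by rewrite !mxE eqxx mul1r addr0.
Qed.

Lemma sgn2 (b : bool) : ((-1) ^+ b * (-1) ^+ b : R) = 1.
Proof. by case: b; rewrite ?expr1 ?expr0 ?mulrNN ?mulr1. Qed.

Lemma gaugeK s : gauge s *m gauge s = 1%:M.
Proof.
apply/matrixP => i j; rewrite gaugeMl !mxE.
case: (eqVneq i j) => [->|nij]; first by rewrite mul1r sgn2.
by rewrite mul0r mulr0.
Qed.

Lemma gaugeT s : (gauge s)^T = gauge s.
Proof.
apply/matrixP => i j; rewrite !mxE eq_sym.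
by case: (eqVneq j i) => [->|]; rewrite ?mul0r.
Qed.

Lemma lapT M : M^T = M -> (signed_laplacian M)^T = signed_laplacian M.
Proof.
move=> HT; rewrite /signed_laplacian linearB /= HT; congr (_ - _).
apply/matrixP => i j; rewrite !mxE eq_sym.
by case: (eqVneq j i) => [->|]; rewrite ?mul0r.
Qed.

Lemma gauge_lap M s : (forall i j, 0 <= (gauge s *m M *m gauge s) i j) ->
  gauge s *m signed_laplacian M *m gauge s = unsigned_laplacian M.
Proof.
move=> H; apply/matrixP => i j.
have Hij : (-1) ^+ s i * M i j * (-1) ^+ s j = `|M i j|.
  have := H i j; rewrite gaugeMr gaugeMl => h.
  rewrite -(ger0_norm h) !normrM !normrX normrN1 !expr1n mul1r mulr1 //.
rewrite gaugeMr gaugeMl /unsigned_laplacian /signed_laplacian !mxE.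
rewrite mulrBr mulrBl Hij; congr (_ - _).
case: (eqVneq i j) => [<-|nij]; last by rewrite !mul0r mulr0 mul0r.
rewrite !mul1r mulrC mulrA sgn2 mul1r.
by apply: eq_bigr => k _; rewrite mxE normr_id.
Qed.
End H.


Lemma block_comm {R : realFieldType} {m} {X L : 'M[R]_(m + 1)} :
  X *m L = L *m X -> ursubmx X = 0 -> dlsubmx X = 0 -> drsubmx X = 1%:M ->
  ulsubmx X *m ulsubmx L = ulsubmx L *m ulsubmx X /\
  ulsubmx X *m ursubmx L = ursubmx L.
Proof.
move=> E Hur Hdl Hdr.
have EX : X = block_mx (ulsubmx X) 0 0 1%:M by rewrite -Hur -Hdl -Hdr submxK.
move: E; rewrite EX -[L]submxK !mulmx_block => /eq_block_mx [h1 h2 _ _].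
move: h1 h2; rewrite !mul0mx !mulmx0 !addr0 !add0r ?mul1mx ?mulmx1 => h1 h2.
by rewrite !block_mxKul submxK.

Qed.

Theorem lemma2 (R : realFieldType) (m : nat) (A : 'M[R]_(m + 1)) :
  signed_adjacency A -> connected_graph A ->
  structurally_balanced A ->
  input_symmetric (unsigned_laplacian A) ->
  let Af := ulsubmx (signed_laplacian A) in
  let Bf := ursubmx (signed_laplacian A) in
  exists J' : 'M[R]_m,
    J' != 1%:M /\
    J' *m Af = Af *m J' /\
    J'^T *m Bf = Bf /\
    (forall (v : 'cV[R]_m) (lambda : R), Af *m v = lambda *: v ->
       Af *m (J' *m v) = lambda *: (J' *m v) /\
       Af *m (v - J' *m v) = lambda *: (v - J' *m v)).
Proof.
move=> [AT _] _ [g Hg] [s [Pn1 [PL Pe]]] Af Bf.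
set G := @gauge R (m + 1) g.
set Ls := signed_laplacian A.
set Pi : 'M[R]_(m + 1) := perm_mx s.
set n := input_node m.
have GG : G *m G = 1%:M by apply: gaugeK.
have LsT : Ls^T = Ls by apply: lapT.
have HL : G *m Ls *m G = unsigned_laplacian A by apply: gauge_lap.
set J := G *m Pi *m G.
have JL : J *m Ls = Ls *m J.
  have -> : Ls = G *m unsigned_laplacian A *m G.
    by rewrite -HL !mulmxA GG mul1mx -mulmxA GG mulmx1.
  have sand : forall X Y : 'M[R]_(m+1), G *m X *m G *m (G *m Y *m G) = G *m (X *m Y) *m G.
    by move=> X Y; rewrite !mulmxA -[G *m X *m G *m G]mulmxA GG mulmx1.
  by rewrite /J !sand PL.
have JTL : J^T *m Ls = Ls *m J^T.
  by rewrite -{1}LsT -trmx_mul -JL trmx_mul LsT.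
have sn : forall i, (s i == n) = (i == n).
  move=> i; move/matrixP: Pe => /(_ i 0).
  rewrite !mxE (bigD1 n) //= big1 => [|k nk]; last by by rewrite !mxE (negPf nk) ?andbF ?mulr0 ?mul0r.
  rewrite /perm_mx !mxE !eqxx andbT mulr1 addr0 => /eqP.
  by rewrite eqr_nat => /eqP; case: (s i == n); case: (i == n).
have JE : forall i j, J i j = (-1) ^+ g i * (s i == j)%:R * (-1) ^+ g j.
  by move=> i j; rewrite /J gaugeMr gaugeMl !mxE.
have snn : s n = n by apply/eqP; rewrite sn.
have Jdef : J = G *m Pi *m G by [].
clearbody J.
have Hur : forall X : 'M[R]_(m+1), (X = J \/ X = J^T) -> ursubmx X = 0.
  move=> X HX; apply/matrixP => i j; rewrite [RHS]mxE mxE; case: HX => ->; rewrite !mxE ?JE.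
    have -> : rshift m j = n by rewrite /n /input_node (ord1 j).
    by rewrite sn /n /input_node eq_lrshift mulr0 mul0r.
  have -> : rshift m j = n by rewrite /n /input_node (ord1 j).
  by rewrite snn /n /input_node eq_rlshift mulr0 mul0r.
have Hdl : forall X : 'M[R]_(m+1), (X = J \/ X = J^T) -> dlsubmx X = 0.
  move=> X HX; apply/matrixP => i j; rewrite [RHS]mxE mxE; case: HX => ->; rewrite !mxE ?JE.
    have -> : rshift m i = n by rewrite /n /input_node (ord1 i).
    by rewrite snn /n /input_node eq_rlshift mulr0 mul0r.
  have -> : rshift m i = n by rewrite /n /input_node (ord1 i).
  by rewrite sn /n /input_node eq_lrshift mulr0 mul0r.
have Hdr : forall X : 'M[R]_(m+1), (X = J \/ X = J^T) -> drsubmx X = 1%:M.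
  move=> X HX; apply/matrixP => i j; rewrite (ord1 i) (ord1 j) !mxE eqxx.
  have -> : rshift m ord0 = n by [].
  by case: HX => ->; rewrite ?mxE JE snn eqxx mulr1 sgn2.
have [C1 _] := block_comm JL (Hur _ (or_introl erefl)) (Hdl _ (or_introl erefl)) (Hdr _ (or_introl erefl)).
have [_ C2] := block_comm JTL (Hur _ (or_intror erefl)) (Hdl _ (or_intror erefl)) (Hdr _ (or_intror erefl)).
exists (ulsubmx J); split; last split; [|exact: C1|split].
- apply: contra Pn1 => /eqP HJ; apply/eqP.
  have EJ : J = 1%:M.
    by rewrite -(submxK J) HJ (Hur _ (or_introl erefl)) (Hdl _ (or_introl erefl)) (Hdr _ (or_introl erefl)) -scalar_mx_block.
  have : G *m J *m G = 1%:M by rewrite EJ mulmx1 GG.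
  by rewrite Jdef !mulmxA GG mul1mx -mulmxA GG mulmx1.
- by rewrite trmx_ulsub.
- move=> v l Hv; rewrite mulmxA -C1 -mulmxA Hv scalemxAr; split => //.
  by rewrite mulmxBr Hv mulmxA -C1 -mulmxA Hv -scalemxAr scalerBr.
Qed.
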